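(* Let $\Sigma$ be an alphabet with $|\Sigma|\geq 3$ and $n\geq 1$. If $g\colon\mathcal{T}(\Sigma)^n\to\mathcal{T}(\Sigma)$ is WCP, then there exists a polynomial $P_g(x_1,\ldots,x_n)$ such that $g(\vec u)=\widetilde{P_g}(\vec u)$ for all $\vec u\in\Sigma^n$.
   Context: Let $\Sigma$ be an alphabet not containing $0,1$. A binary tree over $\Sigma$ is a finite set $t \subseteq \{0,1\}^*\Sigma$ such that for any $ua, vb \in t$ with $ua \neq vb$, $u$ is not a prefix of $v$ and $v$ is not a prefix of $u$; $\mathcal{T}(\Sigma)$ is the set of such trees, $\mathbf 0=\emptyset$, each letter $a$ is identified with $\{a\}$, and $t\star t' = 0.t\cup 1.t'$. Every map $h\colon\Sigma\to\mathcal{T}(\Sigma)$ extends uniquely to an endomorphism of $\langle\mathcal{T}(\Sigma),\star\rangle$, still denoted $h$. A function $g\colon\mathcal{T}(\Sigma)^n\to\mathcal{T}(\Sigma)$ is WCP if for every idempotent mapping $h\colon\Sigma\to\Sigma$ and all $\vec u,\vec v\in\Sigma^n$, $h(\vec u)=h(\vec v)$ implies $h(g(\vec u))=h(g(\vec v))$, where $h(\langle u_1,\ldots,u_n\rangle)=\langle h(u_1),\ldots,h(u_n)\rangle$. Let $x_1,\ldots,x_n\notin\Sigma$ be variables. A polynomial $P(x_1,\ldots,x_n)$ is a tree over the alphabet $\Sigma\cup\{x_1,\ldots,x_n\}$; its polynomial function $\widetilde P\colon\mathcal{T}(\Sigma)^n\to\mathcal{T}(\Sigma)$ is defined, for $\vec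 u=\langle t_1,\ldots,t_n\rangle$, by $\widetilde P(\vec u)=P$ if $P=\mathbf 0$ or $P\in\Sigma$; $\widetilde P(\vec u)=t_i$ if $P=x_i$; $\widetilde P(\vec u)=\widetilde{P_1}(\vec u)\star\widetilde{P_2}(\vec u)$ if $P=P_1\star P_2$. *)

(* Defs.v *)
From HB Require Import structures.
From mathcomp Require Import all_boot.
From mathcomp Require Import finmap.

Set Implicit Arguments.
Unset Strict Implicit.
Unset Printing Implicit Defensive.

Local Open Scope fset_scope.

(* A word of {0,1}^* A is a pair (w, a) with w : seq bool (false = 0,
   true = 1) and a : A.  A raw set of such words: *)
Definition rawtree (A : choiceType) := {fset (seq bool * A)}.

Definition is_tree (A : choiceType) (t : rawtree A) : bool :=
  all (fun x => all (fun y => (x != y) ==> ~~ prefix x.1 y.1) (enum_fset t))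
      (enum_fset t).

Record tree (A : choiceType) := Tree { tset :> rawtree A; tsetP : is_tree tset }.

(* the letter a, identified with the tree {a} *)
Lemma leaf_tree (A : choiceType) (a : A) : is_tree [fset ([::], a)].
Proof.
rewrite /is_tree; apply/allP => x /[!in_fset1] /eqP ->.
by apply/allP => y /[!in_fset1] /eqP ->; rewrite eqxx.
Qed.
Definition leaf (A : choiceType) (a : A) : tree A := Tree (leaf_tree a).

Definition rstar (A : choiceType) (t t' : rawtree A) : rawtree A :=
  [fset (false :: x.1, x.2) | x in t] `|` [fset (true :: x.1, x.2) | x in t'].

(* The endomorphism extension of a letter-to-letter map h : A -> A
   (i.e. of a -> {h a}): it relabels every leaf, h(t) = {w (h a) | wa in t}. *)
Definition tmap (A : choiceType) (h : A -> A) (t : rawtree A) : rawtree A :=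
  [fset (x.1, h x.2) | x in t].

Definition WCP (S : choiceType) (n : nat) (g : ('I_n -> tree S) -> tree S) : Prop :=
  forall h : S -> S, (forall a, h (h a) = h a) ->
  forall u v : 'I_n -> S, (forall i, h (u i) = h (v i)) ->
  tmap h (g (fun i => leaf (u i))) = tmap h (g (fun i => leaf (v i))).

(* Polynomials: trees over S + {x_1..x_n} (inl a = letter a, inr i = x_i). *)
Definition poly_tree (S : choiceType) (n : nat) := tree (S + 'I_n)%type.

Definition rsub (B : choiceType) (b : bool) (P : rawtree B) : rawtree B :=
  [fset (behead x.1, x.2) | x in P & ohead x.1 == Some b].

Definition depth (B : choiceType) (P : rawtree B) : nat :=
  \max_(x <- enum_fset P) size x.1.

(* Recursive evaluation following the paper's clauses:
   P = 0 -> 0 ; P = a -> a ; P = x_i -> t_i ; P = P0 * P1 -> ev P0 * ev P1.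
   (k is fuel, always sufficient when k = depth P + 1.) *)
Fixpoint peval_rec (S : choiceType) (n : nat) (k : nat)
    (P : rawtree (S + 'I_n)%type) (ts : 'I_n -> rawtree S) : rawtree S :=
  match k with
  | 0 => fset0
  | k'.+1 =>
    if P == fset0 then fset0 else
    match [seq x <- enum_fset P | x.1 == [::]] with
    | c :: _ => match c.2 with inl a => [fset ([::], a)] | inr i => ts i end
    | [::] => rstar (peval_rec k' (rsub false P) ts) (peval_rec k' (rsub true P) ts)
    end
  end.

Definition peval (S : choiceType) (n : nat) (P : poly_tree S n)
    (ts : 'I_n -> tree S) : rawtree S :=
  peval_rec (depth (tset P)).+1 (tset P) (fun i => tset (ts i)).

(* Main.v *)
Require Import Defs.
From mathcomp Require Import all_boot.
From mathcomp Require Import finmap.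
From Stdlib Require Import Classical IndefiniteDescription.
Set Implicit Arguments. Unset Strict Implicit. Unset Printing Implicit Defensive.
Local Open Scope fset_scope.

Lemma treeP (A : choiceType) (t : rawtree A) :
  is_tree t <-> (forall x y, x \in t -> y \in t -> x != y -> ~~ prefix x.1 y.1).
Proof.
split.
- move=> /allP H x y xt yt xy. have := H x xt => /allP /(_ y yt). by rewrite xy.
- move=> H; apply/allP => x xt; apply/allP => y yt; apply/implyP; exact: H.
Qed.

Lemma tree_uniq (A : choiceType) (t : rawtree A) x y :
  is_tree t -> x \in t -> y \in t -> x.1 = y.1 -> x = y.
Proof.
move=> /treeP H xt yt e; apply/eqP; apply/negPn/negP => ne.
by move: (H x y xt yt ne); rewrite e prefix_refl.
Qed.

Lemma imP (A B : choiceType) (f : A -> B) (P : {fset A}) z :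
  reflect (exists2 x, x \in P & z = f x) (z \in [fset f x | x in P]).
Proof. by apply: (iffP (imfsetP _ _ _ _)) => [[x]|[x]]; exists x. Qed.

Lemma imPc (A B : choiceType) (f : A -> B) (P : {fset A}) (c : pred A) z :
  reflect (exists2 x, (x \in P) && c x & z = f x) (z \in [fset f x | x in P & c x]).
Proof. by apply: (iffP (imfsetP _ _ _ _)) => [[x]|[x]]; exists x. Qed.


Definition interp (S : choiceType) n (u : 'I_n -> S) (c : (S + 'I_n)%type) : S :=
  match c with inl a => a | inr i => u i end.

Lemma rsub_tree (B : choiceType) b (P : rawtree B) : is_tree P -> is_tree (rsub b P).
Proof.
move=> /treeP H; apply/treeP => x y /imPc [x' /andP [x'P hx] ->] /imPc [y' /andP [y'P hy] ->] ne.
have nxy : x' != y' by apply: contraNneq ne => ->.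
move: (H _ _ x'P y'P nxy).
case: x' {x'P nxy ne} hx => [[|bx wx] ax] //= /eqP [->].
case: y' {y'P} hy => [[|by' wy] ay] //= /eqP [->].
by rewrite eqxx.
Qed.

Lemma peval_ok (S : choiceType) n (u : 'I_n -> S) k :
  forall P : rawtree (S + 'I_n)%type, is_tree P -> (forall x, x \in P -> size x.1 < k) ->
  peval_rec k P (fun i => [fset ([::], u i)]) = [fset (x.1, interp u x.2) | x in P].
Proof.
elim: k => [|k IH] P tP sP.
  case: (fset_0Vmem P) => [->|[x xP]]; first by rewrite imfset0.
  by have := sP x xP.
rewrite /=; case: eqP => [->|P0]; first by rewrite imfset0.
case E: [seq x <- enum_fset P | x.1 == [::]] => [|c l].
  have nn : forall x, x \in P -> x.1 != [::].
    move=> x xP; apply/negP => x0.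
    have : x \in [seq x <- enum_fset P | x.1 == [::]] by rewrite mem_filter x0.
    by rewrite E.
  rewrite !IH //; last first.
  - move=> x /imPc [y /andP [yP hy] ->] /=; have := sP y yP.
    by case: y {yP} hy => [[|b w] a].
  - exact: rsub_tree.
  - move=> x /imPc [y /andP [yP hy] ->] /=; have := sP y yP.
    by case: y {yP} hy => [[|b w] a].
  - exact: rsub_tree.
  apply/fsetP => z; apply/idP/idP.
  + rewrite in_fsetU => /orP [] /imP [y /imP [y' /imPc [x /andP [xP hx] ->] ->] ->] /=;
    apply/imP; exists x => //; by case: x {xP} hx => [[|b w] a] //= /eqP [->].
  + move=> /imP [x xP ->]; rewrite in_fsetU; have := nn x xP.
    case: x xP => [[|[] w] a] // xP _; apply/orP; [right|left].
    * apply/imP; exists (w, interp u a) => //; apply/imP; exists (w, a) => //.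
      by apply/imPc; exists (true :: w, a); rewrite ?xP.
    * apply/imP; exists (w, interp u a) => //; apply/imP; exists (w, a) => //.
      by apply/imPc; exists (false :: w, a); rewrite ?xP.
have cin : c \in [seq x <- enum_fset P | x.1 == [::]] by rewrite E mem_head.
move: cin; rewrite mem_filter => /andP [c1 cP].
have PE : P = [fset c].
  apply/fsetP => y; rewrite in_fset1; apply/idP/eqP => [yP|->//].
  apply/eqP; apply/negPn/negP => ne.
  by move/treeP: tP => /(_ c y cP yP); rewrite eq_sym ne (eqP c1) prefix0s => /(_ isT).
rewrite PE; apply/fsetP => z.
case: c {E cP PE} c1 => [w [a|i]] /= /eqP ->; apply/idP/idP.
- by move/fset1P ->; apply/imP; exists ([::], inl a) => //; apply/fset1P.
- by move=> /imP [x] /fset1P -> ->; apply/fset1P.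
- by move/fset1P ->; apply/imP; exists ([::], inr i) => //; apply/fset1P.
- by move=> /imP [x] /fset1P -> ->; apply/fset1P.
Qed.


Lemma third (S : finType) : 2 < #|S| -> forall a b : S, exists c : S, (c != a) && (c != b).
Proof.
move=> H a b; case: (pickP [pred c | (c != a) && (c != b)]) => [c Hc|H0]; first by exists c.
suff : #|S| <= 2 by rewrite leqNgt H.
apply: (@leq_trans #|[:: a; b]|); last exact: card_size.
apply: subset_leq_card; apply/subsetP => x _; have := H0 x => /=.
by rewrite !inE; case: (x == a); case: (x == b).
Qed.

Section Comb.
Variables (S : finType) (n : nat) (f : ('I_n -> S) -> S).
Hypothesis S3 : 2 < #|S|.
Hypothesis Hf : forall h : S -> S, (forall a, h (h a) = h a) ->
  forall u v : 'I_n -> S, (forall i, h (u i) = h (v i)) -> h (f u) = h (f v).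

Lemma fext u v : (forall i, u i = v i) -> f u = f v.
Proof. by move=> e; apply: (Hf (h := id)) => // i; rewrite e. Qed.

Lemma const_case b u : (forall j, f u != u j) -> f u = b -> forall v, f v = b.
Proof.
move=> Hu fub.
have step1 : forall v, (forall j, v j != b) -> f v = b.
  move=> v vb; have [c /andP [cb _]] := third S3 b b.
  pose h x := if x == b then b else c.
  have hid : forall a, h (h a) = h a.
    by move=> a; rewrite /h; case: (a == b); rewrite ?eqxx // (negbTE cb).
  have := Hf hid (u := u) (v := v).
  rewrite /h fub eqxx; case: eqP => // _ H; suff : b = c by move=> e; rewrite e eqxx in cb.
  apply: H => i; move: (Hu i) (vb i); rewrite fub eq_sym.
  by move=> /negbTE -> /negbTE ->.
have step2 : forall v c, c != b -> f v = b \/ f v = c.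
  move=> v c cb; pose w j := if v j == b then c else v j.
  have fw : f w = b.
    apply: step1 => j; rewrite /w; case: (v j =P b) => [_|/eqP] //.
  pose h x := if x == b then c else x.
  have hid : forall a, h (h a) = h a.
    by move=> a; rewrite /h; case: (a =P b) => [_|/eqP/negbTE ab]; rewrite ?ab ?(negbTE cb).
  have := Hf hid (u := v) (v := w); rewrite fw /h eqxx.
  case: eqP => [->|_]; first by left.
  move=> H; right; apply: H => i; rewrite /w; case: (v i =P b) => [_|/eqP/negbTE vb];
  by rewrite ?(negbTE cb) ?vb.
move=> v; have [c /andP [cb _]] := third S3 b b.
have [d /andP [db dc]] := third S3 b c.
case: (step2 v c cb) => // e1; case: (step2 v d db) => // e2.
by move: dc; rewrite -e2 e1 eqxx.
Qed.

Definition col (x b : S) (X : {set 'I_n}) := fun i : 'I_n => if i \in X then x else b.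
Definition pre (u : 'I_n -> S) x := [set i | u i == x].
Definition psi x b X := f (col x b X) == x.

Lemma L1 u x b : x != b -> (f u == x) = psi x b (pre u x).
Proof.
move=> xb; pose h y := if y == x then x else b.
have hid : forall a, h (h a) = h a.
  by move=> a; rewrite /h; case: (a =P x) => [_|_]; rewrite ?eqxx // eq_sym (negbTE xb).
have Hh : forall i, h (u i) = h (col x b (pre u x) i).
  move=> i; rewrite /h /col inE; case: (u i =P x) => [_|_]; rewrite ?eqxx //.
  by rewrite eq_sym (negbTE xb).
have := Hf hid Hh; rewrite /psi /h.
case: (f u =P x) => [_|_]; case: (f (col _ _ _) =P x) => [_|_] // e.
- by move: xb; rewrite e eqxx.
- by move: xb; rewrite e eqxx.
Qed.

Lemma pre_col x b X : x != b -> pre (col x b X) x = X.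
Proof.
by move=> xb; apply/setP => i; rewrite /pre /col inE; case: (i \in X); rewrite ?eqxx // eq_sym (negbTE xb).
Qed.

Lemma L2 x b b' X : x != b -> x != b' -> psi x b X = psi x b' X.
Proof. by move=> xb xb'; rewrite -(pre_col X xb') -L1 // pre_col. Qed.

Section Cons.
Hypothesis cons : forall u, exists j, f u = u j.

Lemma L3 x b X : x != b -> psi b x (~: X) = ~~ psi x b X.
Proof.
move=> xb; rewrite /psi (@fext _ (col x b X)); last first.
  by move=> i; rewrite /col inE; case: (i \in X).
have [j ->] := cons (col x b X); rewrite /col; case: (j \in X);
  by rewrite ?eqxx ?(negbTE xb) // eq_sym xb.
Qed.

Lemma L4 x b X : x != b -> psi x b X = psi b x X.
Proof.
move=> xb; have [c /andP [cx cb]] := third S3 x b.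
have xc : x != c by rewrite eq_sym.
have bc : b != c by rewrite eq_sym.
have bx : b != x by rewrite eq_sym.
rewrite (@L2 x b c X xb xc) -[psi x c X]negbK -(@L3 x c X xc) (@L2 c x b (~: X) cx cb).
by rewrite (@L3 b c X bc) negbK (@L2 b c x X bc bx).
Qed.

Definition phi0 a0 b0 X := psi a0 b0 X.

Lemma L5 a0 b0 x b X : a0 != b0 -> x != b -> psi x b X = psi a0 b0 X.
Proof.
move=> ab xb; case: (x =P a0) => [e|/eqP xa]; first by rewrite e; apply: L2; rewrite // -e.
rewrite (@L2 x b a0 X xb xa) L4 // (@L2 a0 x b0 X) // eq_sym //.
Qed.


Variables (a0 b0 c0 : S).
Hypotheses (ab : a0 != b0) (ac : a0 != c0) (bc : b0 != c0).

Lemma key u x : (f u == x) = psi a0 b0 (pre u x).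
Proof.
have [b /andP [bx _]] := third S3 x x.
have xb : x != b by rewrite eq_sym.
by rewrite (@L1 u x b xb) (@L5 a0 b0 x b _ ab xb).
Qed.

Lemma phiC X : psi a0 b0 (~: X) = ~~ psi a0 b0 X.
Proof. by rewrite -(@L5 a0 b0 b0 a0 (~: X) ab) ?L3 // eq_sym. Qed.

Definition u3 (A B : {set 'I_n}) := fun i => if i \in A then a0 else if i \in B then b0 else c0.

Lemma P3 (A B : {set 'I_n}) : (forall i, i \in A -> i \notin B) ->
  [/\ psi a0 b0 A = (f (u3 A B) == a0), psi a0 b0 B = (f (u3 A B) == b0),
      psi a0 b0 (~: (A :|: B)) = (f (u3 A B) == c0) &
      [|| f (u3 A B) == a0, f (u3 A B) == b0 | f (u3 A B) == c0]].
Proof.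
move=> dis; rewrite !key; split.
- congr psi; apply/setP => i; rewrite /pre /u3 !inE.
  case: (i \in A); rewrite ?eqxx //; case: (i \in B); by rewrite // eq_sym ?(negbTE ab) ?(negbTE ac).
- congr psi; apply/setP => i; rewrite /pre /u3 !inE.
  case iA: (i \in A); first by rewrite (negbTE (dis i iA)) (negbTE ab).
  by case: (i \in B); rewrite ?eqxx // eq_sym (negbTE bc).
- congr psi; apply/setP => i; rewrite /pre /u3 !inE.
  case: (i \in A); rewrite ?(negbTE ac) //; case: (i \in B); by rewrite ?eqxx ?(negbTE bc).
- rewrite -!key; have [j ->] := cons (u3 A B); rewrite /u3.
  by case: (j \in A); case: (j \in B); rewrite ?eqxx ?orbT.
Qed.

Lemma proj_case : exists i0, forall u, f u = u i0.
Proof.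
have phiT : (psi a0 b0) setT.
   have <- : pre (fun _ => a0) a0 = setT by apply/setP => i; rewrite !inE eqxx.
  by rewrite -key; have [j ->] := cons (fun _ => a0).
have phi0 : ~~ (psi a0 b0) set0 by rewrite -setCT phiC negbK.
have [X phiX Xmin] := @arg_minnP _ setT (psi a0 b0) (fun X => #|X|) phiT.
have : X != set0 by apply: contraNneq phi0 => <-.
case/set0Pn => i0 i0X.
have phi1 : (psi a0 b0) [set i0].
  apply/negPn/negP => np1.
  have npY : ~~ (psi a0 b0) (X :\ i0).
    apply/negP => pY; have := Xmin _ pY; rewrite leqNgt.
    by rewrite (proper_card (properD1 i0X)).
  have dis : forall i, i \in [set i0] -> i \notin X :\ i0.
    by move=> i; rewrite !inE => /eqP ->; rewrite eqxx.
  have [e1 e2 e3 /or3P []] := P3 dis; rewrite -?e1 -?e2 -?e3 ?(negbTE np1) ?(negbTE npY) //.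
  by rewrite setD1K // phiC phiX.
exists i0 => u; apply/eqP; rewrite key.
have : i0 \in pre u (u i0) by rewrite inE.
move: (pre u (u i0)) => Z i0Z; apply/negPn/negP => npZ.
have dis : forall i, i \in [set i0] -> i \notin Z :\ i0.
  by move=> i; rewrite !inE => /eqP ->; rewrite eqxx.
have [e1 _ e3 _] := P3 dis.
move: e1 e3; rewrite setD1K // phiC (negbTE npZ) phi1 /= => /esym/eqP e1 /esym/eqP e3.
by move: ac; rewrite -e1 e3 eqxx.
Qed.
End Cons.
End Comb.


Lemma comb_main (S : finType) (n : nat) (f : ('I_n -> S) -> S) :
  2 < #|S| ->
  (forall h : S -> S, (forall a, h (h a) = h a) ->
    forall u v : 'I_n -> S, (forall i, h (u i) = h (v i)) -> h (f u) = h (f v)) ->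
  exists l : (S + 'I_n)%type, forall u, f u = interp u l.
Proof.
move=> S3 Hf.
case: (classic (exists u, forall j, f u != u j)) => [[u Hu]|Hn].
  by exists (inl (f u)) => v /=; exact: (const_case S3 Hf Hu (erefl _)).
have cons : forall u, exists j, f u = u j.
  move=> u; apply: NNPP => H; apply: Hn; exists u => j; apply/eqP => e; apply: H; by exists j.
case: (pickP (@predT S)) => [a0 _|H0]; last first.
  by move: S3; rewrite (eq_card0 H0).
have [b0 /andP [ba _]] := third S3 a0 a0.
have [c0 /andP [ca cb]] := third S3 a0 b0.
have [i0 Hi] := @proj_case S n f S3 Hf cons a0 b0 c0 ltac:(by rewrite eq_sym) ltac:(by rewrite eq_sym) ltac:(by rewrite eq_sym).
by exists (inr i0).
Qed.

Unset Implicit Arguments.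

Theorem mainTheorem10 (S : finType) (n : nat) :
  3 <= #|S| -> 0 < n ->
  forall g : ('I_n -> tree S) -> tree S, WCP g ->
  exists P : poly_tree S n,
    forall u : 'I_n -> S,
      tset (g (fun i => leaf (u i))) = peval P (fun i => leaf (u i)).
Proof.
move=> S3 _ g Hg.
case: (pickP (@predT S)) => [a0 _|H0]; last by move: S3; rewrite (eq_card0 H0).
pose G (u : 'I_n -> S) := tset (g (fun i => leaf (u i))).
have GT : forall u, is_tree (G u) by move=> u; exact: tsetP.
have posl : forall u v w a, (w, a) \in G u -> exists a', (w, a') \in G v.
  move=> u v w a wa.
  have hid : forall b : S, (fun _ => a0) ((fun _ => a0) b) = (fun _ => a0) b by [].
  have := Hg _ hid u v (fun i => erefl).
  rewrite /tmap => E.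
  have : (w, a0) \in [fset (x.1, (fun _ => a0) x.2) | x in G u].
    by apply/imP; exists (w, a).
  rewrite /G E => /imP [y yG [->]]; by exists y.2; case: y yG => ? ?.
pose D := G (fun _ => a0).
pose fx (x : (seq bool * S)%type) (u : 'I_n -> S) := odflt x.2 [pick a | (x.1, a) \in G u].
have fx_in : forall x u, x \in D -> (x.1, fx x u) \in G u.
  move=> x u xD; rewrite /fx; case: pickP => [a //|H].
  have xD' : (x.1, x.2) \in D by case: x xD {H}.
  have [a' Ha'] := posl _ u x.1 x.2 xD'.
  by move: (H a'); rewrite Ha'.
have fx_uniq : forall x u a, x \in D -> (x.1, a) \in G u -> a = fx x u.
  move=> x u a xD xa.
  by have := tree_uniq (GT u) xa (fx_in x u xD) erefl => -[].
have Hl : forall x, exists l, x \in D -> forall u, fx x u = interp u l.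
  move=> x; case: (boolP (x \in D)) => xD; last by exists (inl a0).
  have S3' : 2 < #|S| by [].
  have Hfx : forall h : S -> S, (forall a, h (h a) = h a) ->
    forall u v : 'I_n -> S, (forall i, h (u i) = h (v i)) -> h (fx x u) = h (fx x v).
    move=> h hid u v huv.
    have E := Hg h hid u v huv.
    have : (x.1, h (fx x u)) \in tmap h (G u) by apply/imP; exists (x.1, fx x u); rewrite ?fx_in.
    rewrite /G E => /imP [y yG [e1 ->]].
    by rewrite (fx_uniq x v y.2 xD); last by rewrite e1; case: y yG {e1}.
  have [l Hl] := @comb_main S n (fx x) S3' Hfx.
  by exists l.
pose lab x := proj1_sig (constructive_indefinite_description _ (Hl x)).
have labP : forall x, x \in D -> forall u, fx x u = interp u (lab x).
  move=> x; exact: (proj2_sig (constructive_indefinite_description _ (Hl x))).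
pose Praw : rawtree (S + 'I_n)%type := [fset (x.1, lab x) | x in D].
have PT : is_tree Praw.
  apply/treeP => x' y' /imP [x xD ->] /imP [y yD ->] ne /=.
  have nxy : x != y by apply: contraNneq ne => ->.
  by move/treeP: (GT (fun _ => a0)) => /(_ x y xD yD nxy).
exists (Tree PT) => u.
rewrite /peval (@peval_ok S n u (depth Praw).+1 Praw PT); last first.
  move=> x xP; rewrite ltnS /depth.
  by apply: (@leq_bigmax_seq _ _ xpredT (fun x => size x.1)).
apply/fsetP => z; apply/idP/idP.
- move=> zG; have zG' : (z.1, z.2) \in G u by case: z zG.
  have [a' Ha'] := posl u (fun _ => a0) z.1 z.2 zG'.
  apply/imP; exists (z.1, lab (z.1, a')); first by apply/imP; exists (z.1, a').
  rewrite /= -labP // -(fx_uniq (z.1, a') u z.2) //; by case: z zG {zG' Ha'}.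
- move=> /imP [x' /imP [x xD ->] ->] /=.
  by rewrite -labP //; exact: fx_in.
Qed.
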